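(* The least fixed point $(T^*_\infty,P^*_\infty)$ of the modified jump $\Gamma^*_{\mathscr{TP}}$ (the stage at which the modified sequence stabilizes) is consistent, i.e. $T^{*+}_\infty\cap T^{*-}_\infty=\emptyset$ and $P^{*+}_\infty\cap P^{*-}_\infty=\emptyset$, and (hence) sound$^*$, i.e. for every $\mathcal L$-sentence $\varphi$, if either $\#\varphi\in P_0^{*-}$ or $(\mathbb N,T^*_\infty,P^*_\infty)\models_{SK}\varphi\vee\neg\varphi$, then $(\mathbb N,T^*_\infty,P^*_\infty)\not\models_{SK}\mathscr P(\varphi)$.
   Context: Language. Let $\mathcal L_{\mathbb N}$ be the language of first-order Peano arithmetic and $\mathcal L=\mathcal L_{\mathbb N}\cup\{\mathrm T,\mathrm P\}$ with unary predicates $\mathrm T,\mathrm P$. $\mathcal L$-formulas are in Tait style: literals are $s=t$, $s\neq t$, $\mathrm Tt$, $\neg\mathrm Tt$, $\mathrm Pt$, $\neg\mathrm Pt$; formulas are built from literals by $\wedge,\vee,\forall,\exists$; negation of an arbitrary formula is defined by De Morgan dualities with $\neg\neg\varphi:=\varphi$. A standard Gödel numbering is fixed; $\#e$ is the code of $e$, $\ulcorner e\urcorner$ the numeral of $\#e$, $\mathrm{val}(t)$ the value of a closed term $t$, $\dot\neg$ the primitive recursive function with $\dot\neg(\#\varphi)=\#\neg\varphi$; $\mathrm T\varphi,\mathrm P\varphi$ abbreviate $\mathrm T\ulcorner\varphi\urcorner,\mathrm P\ulcorner\varphi\urcorner$. Semantics. A partial model is $(\mathbb N,T,P)$ with $\mathbb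 N$ the standard model and $T=(T^+,T^-)$, $P=(P^+,P^-)$ pairs of subsets of $\omega$. Strong Kleene satisfaction $\models_{SK}$: arithmetic literals evaluated in $\mathbb N$; $\mathrm Tt$ satisfied iff $\mathrm{val}(t)\in T^+$, $\neg\mathrm Tt$ iff $\mathrm{val}(t)\in T^-$, likewise for $\mathrm P$ with $P^\pm$; conjunction iff both, disjunction iff at least one, $\forall x\varphi(x)$ iff all numeral instances, $\exists x\varphi(x)$ iff some numeral instance. Base paradoxicality. $\mathrm{PA}[\mathrm{SK}]$ is the two-sided sequent calculus for Strong Kleene logic with identity in $\mathcal L$ (initial sequents $\varphi\Rightarrow\varphi$, cut, weakening, the rule from $\Gamma\Rightarrow\Delta,\varphi$ infer $\neg\varphi,\Gamma\Rightarrow\Delta$, usual rules for $\wedge,\vee,\forall,\exists$, reflexivity $\Rightarrow t=t$, replacement from $\Gamma\Rightarrow\Delta,\varphi(t)$ infer $\Gamma\Rightarrow\Delta,s\neq t,\varphi(s)$) plus the initial sequents of Peano arithmetic and the induction rule for all $\mathcal L$-formulas. A sentence $\varphi$ is base paradoxical iff $\mathrm{PA}[\mathrm{SK}]$ derives $\varphi\Leftrightarrow\neg\mathrm T\varphi$ and $\neg\varphi\Leftrightarrow\mathrm T\varphi$ ($\Leftrightarrow$ meaning both sequents). $B(x)$ is an $\mathcal L_{\mathbb N}$-formula defining in $\mathbb N$ the set of codes of base paradoxical sentences, and $\Pi(x):=B(x)\vee B(\dot\neg x)$. Paradoxicality clauses. Let $\mathscr P(x)$ be the $\mathcal L$-formula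 which is the disjunction of: (1) $x$ codes a sentence and $\Pi(x)$; (2) $x$ codes a sentence $\mathrm Tt$ ($t$ a closed term) and $\mathrm P(\mathrm{val}(t))$; (3) $x$ codes a sentence $\neg\mathrm Tt$ and $\mathrm P(\mathrm{val}(t))$; (4) $x$ codes a sentence $\psi\wedge\theta$ and $(\mathrm P\psi\wedge\mathrm P\theta)\vee(\mathrm T\psi\wedge\mathrm P\theta)\vee(\mathrm T\theta\wedge\mathrm P\psi)$; (5) $x$ codes a sentence $\psi\vee\theta$ and $(\mathrm P\psi\wedge\mathrm P\theta)\vee(\neg\mathrm T\psi\wedge\mathrm P\theta)\vee(\neg\mathrm T\theta\wedge\mathrm P\psi)$; (6) $x$ codes a sentence $\forall v\psi$ and $\exists y\,\mathrm P\psi(\dot y)\wedge\forall y(\mathrm P\psi(\dot y)\vee\mathrm T\psi(\dot y))$; (7) $x$ codes a sentence $\exists v\psi$ and $\exists y\,\mathrm P\psi(\dot y)\wedge\forall y(\mathrm P\psi(\dot y)\vee\neg\mathrm T\psi(\dot y))$; here $\psi(\dot y)$ is the code of the result of substituting the numeral of $y$ for $v$. Write $\mathscr P(\varphi)$ for $\mathscr P(\ulcorner\varphi\urcorner)$. Modified sequence. Let $P_0^{*-}$ be the set of codes of the sentences $\mathrm P\ulcorner\varphi\urcorner$ for $\varphi$ an $\mathcal L$-formula. Define $\Gamma^*_{\mathscr{TP}}(T,P)=\big((\{\#\varphi:(\mathbb N,T,P)\models_{SK}\varphi\},\{\#\varphi:(\mathbb N,T,P)\models_{SK}\neg\varphi\}),(\{\#\varphi:(\mathbb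 N,T,P)\models_{SK}\mathscr P(\varphi)\},\{\#\varphi:(\mathbb N,T,P)\models_{SK}\varphi\vee\neg\varphi\}\cup P_0^{*-})\big)$, $\varphi$ ranging over $\mathcal L$-sentences. Define $(T^*_0,P^*_0)=((\emptyset,\emptyset),(\emptyset,P_0^{*-}))$, $(T^*_{\xi+1},P^*_{\xi+1})=\Gamma^*_{\mathscr{TP}}(T^*_\xi,P^*_\xi)$, and $(T^*_\lambda,P^*_\lambda)=\bigcup_{\xi<\lambda}(T^*_\xi,P^*_\xi)$ (componentwise union) for limit $\lambda$; this sequence reaches the least fixed point $(T^*_\infty,P^*_\infty)$ of $\Gamma^*_{\mathscr{TP}}$. *)

(* Defs.v *)
From Stdlib Require Import Arith List Permutation.
Import ListNotations.

(* Terms and Tait-style formulas of L = L_N + {T, P}; de Bruijn variables *)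

Inductive term : Type :=
| tvar  : nat -> term
| tzero : term
| tsucc : term -> term
| tplus : term -> term -> term
| tmult : term -> term -> term.

Inductive form : Type :=
| feq  : term -> term -> form
| fneq : term -> term -> form
| fT   : term -> form
| fnT  : term -> form
| fP   : term -> form
| fnP  : term -> form
| fand : form -> form -> form
| for_ : form -> form -> form
| fall : form -> form              (* binds de Bruijn index 0 *)
| fex  : form -> form.

Fixpoint neg (phi : form) : form :=
  match phi with
  | feq s t => fneq s t
  | fneq s t => feq s t
  | fT t => fnT t
  | fnT t => fT t
  | fP t => fnP t
  | fnP t => fP t
  | fand a b => for_ (neg a) (neg b)
  | for_ a b => fand (neg a) (neg b)
  | fall a => fex (neg a)
  | fex a => fall (neg a)
  end.

Fixpoint closed_term (k : nat) (t : term) : Prop :=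
  match t with
  | tvar n => n < k
  | tzero => True
  | tsucc s => closed_term k s
  | tplus a b | tmult a b => closed_term k a /\ closed_term k b
  end.

Fixpoint closed_form (k : nat) (phi : form) : Prop :=
  match phi with
  | feq s t | fneq s t => closed_term k s /\ closed_term k t
  | fT t | fnT t | fP t | fnP t => closed_term k t
  | fand a b | for_ a b => closed_form k a /\ closed_form k b
  | fall a | fex a => closed_form (S k) a
  end.

Definition sentence (phi : form) : Prop := closed_form 0 phi.

Fixpoint lift_term (k : nat) (t : term) : term :=
  match t with
  | tvar n => if k <=? n then tvar (S n) else tvar n
  | tzero => tzero
  | tsucc s => tsucc (lift_term k s)
  | tplus a b => tplus (lift_term k a) (lift_term k b)
  | tmult a b => tmult (lift_term k a) (lift_term k b)
  end.

Fixpoint lift_form (k : nat) (phi : form) : form :=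
  match phi with
  | feq s t => feq (lift_term k s) (lift_term k t)
  | fneq s t => fneq (lift_term k s) (lift_term k t)
  | fT t => fT (lift_term k t)
  | fnT t => fnT (lift_term k t)
  | fP t => fP (lift_term k t)
  | fnP t => fnP (lift_term k t)
  | fand a b => fand (lift_form k a) (lift_form k b)
  | for_ a b => for_ (lift_form k a) (lift_form k b)
  | fall a => fall (lift_form (S k) a)
  | fex a => fex (lift_form (S k) a)
  end.

Fixpoint subst_term (k : nat) (s : term) (t : term) : term :=
  match t with
  | tvar n => if n =? k then s else if k <? n then tvar (pred n) else tvar n
  | tzero => tzero
  | tsucc u => tsucc (subst_term k s u)
  | tplus a b => tplus (subst_term k s a) (subst_term k s b)
  | tmult a b => tmult (subst_term k s a) (subst_term k s b)
  end.

Fixpoint subst_form (k : nat) (s : term) (phi : form) : form :=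
  match phi with
  | feq a b => feq (subst_term k s a) (subst_term k s b)
  | fneq a b => fneq (subst_term k s a) (subst_term k s b)
  | fT t => fT (subst_term k s t)
  | fnT t => fnT (subst_term k s t)
  | fP t => fP (subst_term k s t)
  | fnP t => fnP (subst_term k s t)
  | fand a b => fand (subst_form k s a) (subst_form k s b)
  | for_ a b => for_ (subst_form k s a) (subst_form k s b)
  | fall a => fall (subst_form (S k) (lift_term 0 s) a)
  | fex a => fex (subst_form (S k) (lift_term 0 s) a)
  end.

Definition inst (phi : form) (t : term) : form := subst_form 0 t phi.

Definition cpair (a b : nat) : nat := (a + b) * (a + b + 1) / 2 + b.

Fixpoint code_term (t : term) : nat :=
  match t with
  | tvar n => cpair 0 n
  | tzero => cpair 1 0
  | tsucc s => cpair 2 (code_term s)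
  | tplus a b => cpair 3 (cpair (code_term a) (code_term b))
  | tmult a b => cpair 4 (cpair (code_term a) (code_term b))
  end.

Fixpoint code (phi : form) : nat :=
  match phi with
  | feq s t => cpair 0 (cpair (code_term s) (code_term t))
  | fneq s t => cpair 1 (cpair (code_term s) (code_term t))
  | fT t => cpair 2 (code_term t)
  | fnT t => cpair 3 (code_term t)
  | fP t => cpair 4 (code_term t)
  | fnP t => cpair 5 (code_term t)
  | fand a b => cpair 6 (cpair (code a) (code b))
  | for_ a b => cpair 7 (cpair (code a) (code b))
  | fall a => cpair 8 (code a)
  | fex a => cpair 9 (code a)
  end.

Fixpoint num (n : nat) : term :=
  match n with
  | 0 => tzero
  | S m => tsucc (num m)
  end.

Definition quote (phi : form) : term := num (code phi).

Record pmodel : Type := PM {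
  Tpos : nat -> Prop; Tneg : nat -> Prop;
  Ppos : nat -> Prop; Pneg : nat -> Prop }.

Definition scons (n : nat) (e : nat -> nat) (k : nat) : nat :=
  match k with 0 => n | S k' => e k' end.

Fixpoint eval (e : nat -> nat) (t : term) : nat :=
  match t with
  | tvar n => e n
  | tzero => 0
  | tsucc s => S (eval e s)
  | tplus a b => eval e a + eval e b
  | tmult a b => eval e a * eval e b
  end.

Definition val (t : term) : nat := eval (fun _ => 0) t.

Fixpoint sat_env (M : pmodel) (e : nat -> nat) (phi : form) : Prop :=
  match phi with
  | feq s t => eval e s = eval e t
  | fneq s t => eval e s <> eval e t
  | fT t => Tpos M (eval e t)
  | fnT t => Tneg M (eval e t)
  | fP t => Ppos M (eval e t)
  | fnP t => Pneg M (eval e t)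
  | fand a b => sat_env M e a /\ sat_env M e b
  | for_ a b => sat_env M e a \/ sat_env M e b
  | fall a => forall n, sat_env M (scons n e) a
  | fex a => exists n, sat_env M (scons n e) a
  end.

Definition satSK (M : pmodel) (phi : form) : Prop := sat_env M (fun _ => 0) phi.

Definition liftL (G : list form) : list form := map (lift_form 0) G.

Inductive PASK : list form -> list form -> Prop :=
| r_init phi : PASK [phi] [phi]
| r_cut G D phi : PASK G (phi :: D) -> PASK (phi :: G) D -> PASK G D
| r_weak G D G' D' : PASK G D -> PASK (G ++ G') (D ++ D')
| r_permL G G' D : Permutation G G' -> PASK G D -> PASK G' D
| r_permR G D D' : Permutation D D' -> PASK G D -> PASK G D'
| r_contrL G D phi : PASK (phi :: phi :: G) D -> PASK (phi :: G) D
| r_contrR G D phi : PASK G (phi :: phi :: D) -> PASK G (phi :: D)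
| r_negL G D phi : PASK G (phi :: D) -> PASK (neg phi :: G) D
| r_andL1 G D a b : PASK (a :: G) D -> PASK (fand a b :: G) D
| r_andL2 G D a b : PASK (b :: G) D -> PASK (fand a b :: G) D
| r_andR G D a b : PASK G (a :: D) -> PASK G (b :: D) -> PASK G (fand a b :: D)
| r_orL G D a b : PASK (a :: G) D -> PASK (b :: G) D -> PASK (for_ a b :: G) D
| r_orR1 G D a b : PASK G (a :: D) -> PASK G (for_ a b :: D)
| r_orR2 G D a b : PASK G (b :: D) -> PASK G (for_ a b :: D)
| r_allL G D a t : PASK (inst a t :: G) D -> PASK (fall a :: G) D
(* eigenvariable = index 0, fresh for the (lifted) context *)
| r_allR G D a : PASK (liftL G) (a :: liftL D) -> PASK G (fall a :: D)
| r_exL G D a : PASK (a :: liftL G) (liftL D) -> PASK (fex a :: G) D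
| r_exR G D a t : PASK G (inst a t :: D) -> PASK G (fex a :: D)
| r_refl t : PASK [] [feq t t]
| r_repl G D a s t :
    PASK G (inst a t :: D) -> PASK G (inst a s :: fneq s t :: D)
| ax_succ0 s : PASK [feq (tsucc s) tzero] []
| ax_succinj s t : PASK [feq (tsucc s) (tsucc t)] [feq s t]
| ax_plus0 s : PASK [] [feq (tplus s tzero) s]
| ax_plusS s t : PASK [] [feq (tplus s (tsucc t)) (tsucc (tplus s t))]
| ax_mult0 s : PASK [] [feq (tmult s tzero) tzero]
| ax_multS s t : PASK [] [feq (tmult s (tsucc t)) (tplus (tmult s t) s)]
(* induction rule, for all L-formulas a(x) (x = index 0):
   from  G, a(x) => a(Sx), D   infer   G, a(0) => a(t), D *)
| r_ind G D a t :
    PASK (a :: liftL G) (subst_form 0 (tsucc (tvar 0)) (lift_form 1 a) :: liftL D) ->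
    PASK (inst a tzero :: G) (inst a t :: D).

Definition biderivable (phi psi : form) : Prop := PASK [phi] [psi] /\ PASK [psi] [phi].

Definition base_paradoxical (phi : form) : Prop :=
  sentence phi /\
  biderivable phi (neg (fT (quote phi))) /\
  biderivable (neg phi) (fT (quote phi)).

(* SK-satisfaction of the L-formula  P(#phi)  (clauses (1)-(7)),
   for a sentence phi; the arithmetical parts are evaluated in N. *)

Definition satPar (M : pmodel) (phi : form) : Prop :=
  (base_paradoxical phi \/ base_paradoxical (neg phi))
  \/ (exists t, closed_term 0 t /\ phi = fT t /\ Ppos M (val t))
  \/ (exists t, closed_term 0 t /\ phi = fnT t /\ Ppos M (val t))
  \/ (exists a b, phi = fand a b /\
        ((Ppos M (code a) /\ Ppos M (code b)) \/
         (Tpos M (code a) /\ Ppos M (code b)) \/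
         (Tpos M (code b) /\ Ppos M (code a))))
  \/ (exists a b, phi = for_ a b /\
        ((Ppos M (code a) /\ Ppos M (code b)) \/
         (Tneg M (code a) /\ Ppos M (code b)) \/
         (Tneg M (code b) /\ Ppos M (code a))))
  \/ (exists a, phi = fall a /\
        (exists y, Ppos M (code (inst a (num y)))) /\
        (forall y, Ppos M (code (inst a (num y))) \/ Tpos M (code (inst a (num y)))))
  \/ (exists a, phi = fex a /\
        (exists y, Ppos M (code (inst a (num y)))) /\
        (forall y, Ppos M (code (inst a (num y))) \/ Tneg M (code (inst a (num y))))).

Definition P0neg (x : nat) : Prop := exists phi : form, x = code (fP (quote phi)).

Definition jump (M : pmodel) : pmodel := PM
  (fun x => exists phi, sentence phi /\ x = code phi /\ satSK M phi)
  (fun x => exists phi, sentence phi /\ x = code phi /\ satSK M (neg phi))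
  (fun x => exists phi, sentence phi /\ x = code phi /\ satPar M phi)
  (fun x => (exists phi, sentence phi /\ x = code phi /\ satSK M (for_ phi (neg phi)))
            \/ P0neg x).

Definition pm_le (M N : pmodel) : Prop :=
  (forall x, Tpos M x -> Tpos N x) /\ (forall x, Tneg M x -> Tneg N x) /\
  (forall x, Ppos M x -> Ppos N x) /\ (forall x, Pneg M x -> Pneg N x).

Definition prefixed (M : pmodel) : Prop := pm_le (jump M) M.

(* Knaster-Tarski least fixed point of the (monotone) jump:
   intersection of all prefixed points *)
Definition lfp_jump : pmodel := PM
  (fun x => forall M, prefixed M -> Tpos M x)
  (fun x => forall M, prefixed M -> Tneg M x)
  (fun x => forall M, prefixed M -> Ppos M x)
  (fun x => forall M, prefixed M -> Pneg M x).

Definition consistent (M : pmodel) : Prop :=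
  (forall x, ~ (Tpos M x /\ Tneg M x)) /\ (forall x, ~ (Ppos M x /\ Pneg M x)).

Definition sound_star (M : pmodel) : Prop :=
  forall phi, sentence phi ->
    (P0neg (code phi) \/ satSK M (for_ phi (neg phi))) -> ~ satPar M phi.

(* Main.v *)
Require Import Defs.
From Stdlib Require Import Arith Lia List Permutation Classical.
Import ListNotations.

Definition tri (s : nat) : nat := s * (s + 1) / 2.

Lemma tri_S s : tri (S s) = tri s + S s.
Proof.
  unfold tri.
  replace (S s * (S s + 1)) with (s * (s + 1) + S s * 2) by ring.
  rewrite Nat.div_add by lia. reflexivity.
Qed.

Lemma tri_mono s d : tri s + s + 1 <= tri (S s + d).
Proof.
  induction d.
  - replace (S s + 0) with (S s) by lia. rewrite tri_S. lia.
  - replace (S s + S d) with (S (S s + d)) by lia. rewrite tri_S. lia.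
Qed.

Lemma cpair_inj a b c d : cpair a b = cpair c d -> a = c /\ b = d.
Proof.
  unfold cpair. fold (tri (a+b)). fold (tri (c+d)). intro H.
  destruct (lt_eq_lt_dec (a+b) (c+d)) as [[Hl|He]|Hl].
  - pose proof (tri_mono (a+b) (c+d - S (a+b))) as H0.
    replace (S (a+b) + (c+d - S(a+b))) with (c+d) in H0 by lia. lia.
  - rewrite He in H. lia.
  - pose proof (tri_mono (c+d) (a+b - S (c+d))) as H0.
    replace (S (c+d) + (a+b - S(c+d))) with (a+b) in H0 by lia. lia.
Qed.

Lemma code_term_inj : forall t1 t2, code_term t1 = code_term t2 -> t1 = t2.
Proof.
  induction t1; destruct t2; simpl; intro H; apply cpair_inj in H; destruct H as [H1 H2];
    try discriminate H1.
  all: try (apply cpair_inj in H2; destruct H2 as [H2 H3]).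
  all: f_equal; auto.
Qed.

Lemma code_inj : forall p1 p2, code p1 = code p2 -> p1 = p2.
Proof.
  induction p1; destruct p2; simpl; intro H; apply cpair_inj in H; destruct H as [H1 H2];
    try discriminate H1.
  all: try (apply cpair_inj in H2; destruct H2 as [H2 H3]).
  all: f_equal; auto using code_term_inj.
Qed.

Ltac bdestr := repeat match goal with
  | |- context [?a <? ?b] => destruct (Nat.ltb_spec a b)
  | |- context [?a =? ?b] => destruct (Nat.eqb_spec a b)
  | |- context [?a <=? ?b] => destruct (Nat.leb_spec a b)
  end.

Definition ins (k v : nat) (e : nat -> nat) (i : nat) : nat :=
  if i <? k then e i else if i =? k then v else e (pred i).

Lemma eval_ext e e' t : (forall i, e i = e' i) -> eval e t = eval e' t.
Proof. intro H; induction t; simpl; auto. Qed.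

Lemma scons_ext n e e' : (forall i, e i = e' i) -> forall i, scons n e i = scons n e' i.
Proof. intros H [|i]; simpl; auto. Qed.

Lemma sat_ext M phi : forall e e', (forall i, e i = e' i) ->
  (sat_env M e phi <-> sat_env M e' phi).
Proof.
  induction phi; intros e e' H; simpl;
    try (rewrite ?(eval_ext e e' t H), ?(eval_ext e e' t0 H); tauto).
  - rewrite (IHphi1 e e' H), (IHphi2 e e' H); tauto.
  - rewrite (IHphi1 e e' H), (IHphi2 e e' H); tauto.
  - split; intros Hn n; [apply (IHphi (scons n e)) | apply (IHphi (scons n e'))]; auto;
      apply scons_ext; auto.
  - split; intros [n Hn]; exists n; [apply (IHphi (scons n e)) | apply (IHphi (scons n e'))]; auto;
      apply scons_ext; auto.
Qed.

Lemma sat_ext_imp M phi e e' : (forall i, e i = e' i) -> sat_env M e phi -> sat_env M e' phi.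
Proof. intros H. apply sat_ext; auto. Qed.


Lemma eval_lift k v e t : eval (ins k v e) (lift_term k t) = eval e t.
Proof.
  induction t; simpl; auto.
  bdestr; simpl; unfold ins; bdestr; try lia; auto.
Qed.

Lemma eval_subst k s e t : eval e (subst_term k s t) = eval (ins k (eval e s) e) t.
Proof.
  induction t; simpl; auto.
  unfold ins; bdestr; simpl; try lia; subst; auto.
Qed.

Lemma ins_scons k v n e i : ins (S k) v (scons n e) i = scons n (ins k v e) i.
Proof.
  destruct i as [|j]; unfold ins; simpl; [reflexivity|].
  bdestr; try lia; auto. destruct j; simpl; [lia|]. reflexivity.
Qed.

Lemma ins0 v e i : ins 0 v e i = scons v e i.
Proof. destruct i; unfold ins; simpl; reflexivity. Qed.


Ltac fixenv Hn := eapply sat_ext_imp; [|exact Hn]; intro;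
  first [apply ins_scons | symmetry; apply ins_scons | apply ins0 | symmetry; apply ins0].

Lemma eval_num e n : eval e (num n) = n.
Proof. induction n; simpl; auto. Qed.

Lemma eval_lift0 n e s : eval (scons n e) (lift_term 0 s) = eval e s.
Proof.
  rewrite <- (eval_lift 0 n e s). apply eval_ext. intro i. symmetry; apply ins0.
Qed.

Lemma sat_lift M phi : forall k v e,
  sat_env M (ins k v e) (lift_form k phi) <-> sat_env M e phi.
Proof.
  induction phi; intros k v e; simpl; rewrite ?eval_lift; try tauto.
  - rewrite IHphi1, IHphi2; tauto.
  - rewrite IHphi1, IHphi2; tauto.
  - split; intros Hn n; specialize (Hn n).
    + apply (IHphi (S k) v). fixenv Hn.
    + apply (IHphi (S k) v) in Hn. fixenv Hn.
  - split; intros [n Hn]; exists n.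
    + apply (IHphi (S k) v). fixenv Hn.
    + apply (IHphi (S k) v) in Hn. fixenv Hn.
Qed.

Lemma sat_lift0 M phi n e : sat_env M (scons n e) (lift_form 0 phi) <-> sat_env M e phi.
Proof.
  rewrite <- (sat_lift M phi 0 n e). apply sat_ext. intro i. symmetry; apply ins0.
Qed.

Lemma sat_subst M phi : forall k s e,
  sat_env M e (subst_form k s phi) <-> sat_env M (ins k (eval e s) e) phi.
Proof.
  induction phi; intros k s e; simpl; rewrite ?eval_subst; try tauto.
  - rewrite IHphi1, IHphi2; tauto.
  - rewrite IHphi1, IHphi2; tauto.
  - split; intros Hn n; specialize (Hn n).
    + rewrite IHphi, eval_lift0 in Hn. fixenv Hn.
    + rewrite IHphi, eval_lift0. fixenv Hn.
  - split; intros [n Hn]; exists n.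
    + rewrite IHphi, eval_lift0 in Hn. fixenv Hn.
    + rewrite IHphi, eval_lift0. fixenv Hn.
Qed.

Lemma sat_inst M a t e : sat_env M e (inst a t) <-> sat_env M (scons (eval e t) e) a.
Proof.
  unfold inst. rewrite sat_subst. apply sat_ext. apply ins0.
Qed.

Lemma sat_inst_num M a y e : sat_env M e (inst a (num y)) <-> sat_env M (scons y e) a.
Proof. rewrite sat_inst, eval_num. tauto. Qed.

Lemma neg_neg phi : neg (neg phi) = phi.
Proof. induction phi; simpl; congruence. Qed.

Lemma neg_subst phi : forall k s, neg (subst_form k s phi) = subst_form k s (neg phi).
Proof. induction phi; intros k s; simpl; congruence. Qed.

Fixpoint fsize (phi : form) : nat :=
  match phi with
  | fand a b | for_ a b => S (fsize a + fsize b)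
  | fall a | fex a => S (fsize a)
  | _ => 1
  end.

Lemma fsize_subst phi : forall k s, fsize (subst_form k s phi) = fsize phi.
Proof. induction phi; intros k s; simpl; auto. Qed.

Lemma sat_neg_cons M : consistent M -> forall phi e,
  sat_env M e phi -> sat_env M e (neg phi) -> False.
Proof.
  intros [HT HP]. induction phi; intros e H1 H2; simpl in *.
  all: try solve [apply (HT _ (conj H1 H2)) | apply (HT _ (conj H2 H1))
                 | apply (HP _ (conj H1 H2)) | apply (HP _ (conj H2 H1)) | auto].
  - destruct H1; destruct H2; eauto.
  - destruct H1; destruct H2; eauto.
  - destruct H2 as [n Hn]. eauto.
  - destruct H1 as [n Hn]. eauto.
Qed.

Lemma le_Tpos M N x : pm_le M N -> Tpos M x -> Tpos N x.
Proof. intros [H _]; auto. Qed.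
Lemma le_Tneg M N x : pm_le M N -> Tneg M x -> Tneg N x.
Proof. intros [_ [H _]]; auto. Qed.
Lemma le_Ppos M N x : pm_le M N -> Ppos M x -> Ppos N x.
Proof. intros [_ [_ [H _]]]; auto. Qed.
Lemma le_Pneg M N x : pm_le M N -> Pneg M x -> Pneg N x.
Proof. intros [_ [_ [_ H]]]; auto. Qed.

Lemma le_refl M : pm_le M M.
Proof. repeat split; auto. Qed.
Lemma le_trans M N K : pm_le M N -> pm_le N K -> pm_le M K.
Proof. intros [A [B [C D]]] [A' [B' [C' D']]]; repeat split; auto. Qed.

Lemma sat_mono M N : pm_le M N -> forall phi e, sat_env M e phi -> sat_env N e phi.
Proof.
  intros Hle. induction phi; intros e H; simpl in *;
    eauto using le_Tpos, le_Tneg, le_Ppos, le_Pneg.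
  - destruct H; split; eauto.
  - destruct H; [left|right]; eauto.
  - destruct H as [n Hn]; eauto.
Qed.

Lemma satPar_mono M N phi : pm_le M N -> satPar M phi -> satPar N phi.
Proof.
  intros Hle. pose proof (le_Tpos M N) as A. pose proof (le_Tneg M N) as B.
  pose proof (le_Ppos M N) as C.
  unfold satPar. intros H.
  destruct H as [H|[H|[H|[H|[H|[H|H]]]]]].
  - left; exact H.
  - right; left. destruct H as (t & H1 & H2 & H3). exists t; auto.
  - right; right; left. destruct H as (t & H1 & H2 & H3). exists t; auto.
  - do 3 right; left. destruct H as (a & b & H1 & H2). exists a, b; split; auto.
    destruct H2 as [[? ?]|[[? ?]|[? ?]]]; auto 6.
  - do 4 right; left. destruct H as (a & b & H1 & H2). exists a, b; split; auto.
    destruct H2 as [[? ?]|[[? ?]|[? ?]]]; auto 6.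
  - do 5 right; left. destruct H as (a & H1 & [y Hy] & H2). exists a; split; auto.
    split; [exists y; auto|]. intro y'; destruct (H2 y'); auto.
  - do 6 right. destruct H as (a & H1 & [y Hy] & H2). exists a; split; auto.
    split; [exists y; auto|]. intro y'; destruct (H2 y'); auto.
Qed.

Lemma jump_mono M N : pm_le M N -> pm_le (jump M) (jump N).
Proof.
  intros Hle; repeat split; simpl.
  - intros x (phi & H1 & H2 & H3). exists phi; repeat split; auto. eapply sat_mono; eauto.
  - intros x (phi & H1 & H2 & H3). exists phi; repeat split; auto. eapply sat_mono; eauto.
  - intros x (phi & H1 & H2 & H3). exists phi; repeat split; auto. eapply satPar_mono; eauto.
  - intros x [(phi & H1 & H2 & H3)|H]; [left|right; auto].
    exists phi; repeat split; auto. eapply sat_mono; eauto.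
Qed.

Definition valid M G D := forall e, (forall phi, In phi G -> sat_env M e phi) ->
  exists psi, In psi D /\ sat_env M e psi.

Lemma in_liftL phi G : In phi (liftL G) -> exists phi0, phi = lift_form 0 phi0 /\ In phi0 G.
Proof. unfold liftL. intro H. apply in_map_iff in H. destruct H as [x [<- H]]. eauto. Qed.

Lemma PASK_sound M : consistent M -> forall G D, PASK G D -> valid M G D.
Proof.
  intros HC G D Hd. induction Hd; intros e HG.
  - exists phi; split; [left; auto | apply HG; left; auto].
  - destruct (IHHd1 e HG) as [psi [[<-|Hin] Hs]].
    + apply IHHd2. intros chi [<-|Hc]; auto.
    + eauto.
  - destruct (IHHd e) as [psi [Hin Hs]].
    + intros; apply HG; apply in_or_app; auto.
    + exists psi; split; [apply in_or_app; auto | auto].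
  - apply IHHd. intros phi Hin. apply HG. eapply Permutation_in; eauto.
  - destruct (IHHd e HG) as [psi [Hin Hs]]. exists psi; split; [eapply Permutation_in; eauto | auto].
  - apply IHHd. intros chi Hin. apply HG. simpl in *; intuition.
  - destruct (IHHd e HG) as [psi [Hin Hs]]. exists psi; split; auto. simpl in *; intuition.
  - destruct (IHHd e) as [psi [[<-|Hin] Hs]].
    + intros; apply HG; right; auto.
    + exfalso. apply (sat_neg_cons M HC phi e Hs (HG _ (or_introl eq_refl))).
    + exists psi; auto.
  - apply IHHd. intros chi [<-|Hin]; [apply (proj1 (HG _ (or_introl eq_refl))) | apply HG; right; auto].
  - apply IHHd. intros chi [<-|Hin]; [apply (proj2 (HG _ (or_introl eq_refl))) | apply HG; right; auto].
  - destruct (IHHd1 e HG) as [psi [[<-|Hin] Hs]]; [|exists psi; split; [right|]; auto].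
    destruct (IHHd2 e HG) as [psi' [[<-|Hin'] Hs']]; [|exists psi'; split; [right|]; auto].
    exists (fand a b); split; [left; auto | simpl; auto].
  - destruct (HG _ (or_introl eq_refl)) as [Ha|Hb].
    + apply IHHd1. intros chi [<-|Hin]; auto. apply HG; right; auto.
    + apply IHHd2. intros chi [<-|Hin]; auto. apply HG; right; auto.
  - destruct (IHHd e HG) as [psi [[<-|Hin] Hs]]; [|exists psi; split; [right|]; auto].
    exists (for_ a b); split; [left; auto | simpl; auto].
  - destruct (IHHd e HG) as [psi [[<-|Hin] Hs]]; [|exists psi; split; [right|]; auto].
    exists (for_ a b); split; [left; auto | simpl; auto].
  - apply IHHd. intros chi [<-|Hin]; [|apply HG; right; auto].
    apply sat_inst. apply (HG _ (or_introl eq_refl)).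
  - destruct (classic (exists psi, In psi D /\ sat_env M e psi)) as [Hd'|Hnd]; [|].
    + destruct Hd' as [psi [Hin Hs]]. exists psi; split; [right|]; auto.
    + exists (fall a); split; [left; auto|]. simpl. intro n.
      destruct (IHHd (scons n e)) as [psi [[<-|Hin] Hs]].
      * intros chi Hin. apply in_liftL in Hin. destruct Hin as [chi0 [-> Hin]].
        apply sat_lift0. auto.
      * exact Hs.
      * apply in_liftL in Hin. destruct Hin as [psi0 [-> Hin]].
        apply sat_lift0 in Hs. exfalso; apply Hnd; eauto.
  - destruct (HG _ (or_introl eq_refl)) as [n Hn].
    destruct (IHHd (scons n e)) as [psi [Hin Hs]].
    + intros chi [<-|Hin]; auto. apply in_liftL in Hin. destruct Hin as [chi0 [-> Hin]].
      apply sat_lift0. apply HG; right; auto.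
    + apply in_liftL in Hin. destruct Hin as [psi0 [-> Hin]].
      apply sat_lift0 in Hs. eauto.
  - destruct (IHHd e HG) as [psi [[<-|Hin] Hs]]; [|exists psi; split; [right|]; auto].
    exists (fex a); split; [left; auto|]. simpl. exists (eval e t). apply sat_inst; auto.
  - exists (feq t t); split; [left; auto | simpl; auto].
  - destruct (IHHd e HG) as [psi [[<-|Hin] Hs]]; [|exists psi; split; [right; right|]; auto].
    destruct (Nat.eq_dec (eval e s) (eval e t)) as [Heq|Hne].
    + exists (inst a s); split; [left; auto|]. apply sat_inst. apply sat_inst in Hs.
      rewrite Heq; auto.
    + exists (fneq s t); split; [right; left; auto | simpl; auto].
  - exfalso. specialize (HG _ (or_introl eq_refl)). simpl in HG. discriminate.
  - exists (feq s t); split; [left; auto|]. specialize (HG _ (or_introl eq_refl)). simpl in *. lia.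
  - exists (feq (tplus s tzero) s); split; [left; auto|]. simpl; lia.
  - exists (feq (tplus s (tsucc t)) (tsucc (tplus s t))); split; [left; auto|]. simpl; lia.
  - exists (feq (tmult s tzero) tzero); split; [left; auto|]. simpl; lia.
  - exists (feq (tmult s (tsucc t)) (tplus (tmult s t) s)); split; [left; auto|]. simpl; lia.
  - destruct (classic (exists psi, In psi D /\ sat_env M e psi)) as [Hd'|Hnd].
    + destruct Hd' as [psi [Hin Hs]]. exists psi; split; [right|]; auto.
    + assert (Hall : forall n, sat_env M (scons n e) a).
      { induction n.
        - apply (sat_inst M a tzero e). apply HG; left; auto.
        - destruct (IHHd (scons n e)) as [psi [[<-|Hin] Hs]].
          + intros chi [<-|Hin]; auto. apply in_liftL in Hin. destruct Hin as [chi0 [-> Hin]].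
            apply sat_lift0. apply HG; right; auto.
          + apply sat_subst in Hs. simpl in Hs.
            apply (sat_lift M a 1 n). eapply sat_ext_imp; [|exact Hs].
            intros [|[|i]]; unfold ins; simpl; reflexivity.
          + apply in_liftL in Hin. destruct Hin as [psi0 [-> Hin]].
            apply sat_lift0 in Hs. exfalso; apply Hnd; eauto. }
      exists (inst a t); split; [left; auto|]. apply sat_inst. apply Hall.
Qed.

Lemma post_Tpos N a : pm_le N (jump N) -> Tpos N (code a) -> satSK N a.
Proof.
  intros H Ht. apply (le_Tpos _ _ _ H) in Ht. destruct Ht as (phi & _ & Hc & Hs).
  apply code_inj in Hc; subst; auto.
Qed.
Lemma post_Tneg N a : pm_le N (jump N) -> Tneg N (code a) -> satSK N (neg a).
Proof.
  intros H Ht. apply (le_Tneg _ _ _ H) in Ht. destruct Ht as (phi & _ & Hc & Hs).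
  apply code_inj in Hc; subst; auto.
Qed.
Lemma post_Ppos N a : pm_le N (jump N) -> Ppos N (code a) -> satPar N a.
Proof.
  intros H Ht. apply (le_Ppos _ _ _ H) in Ht. destruct Ht as (phi & _ & Hc & Hs).
  apply code_inj in Hc; subst; auto.
Qed.

Lemma BP N chi : consistent N -> pm_le N (jump N) -> base_paradoxical chi ->
  ~ satSK N chi /\ ~ satSK N (neg chi).
Proof.
  intros HC Hpost [_ [[H1 _] [H2 _]]].
  pose proof (PASK_sound N HC _ _ H1 (fun _ => 0)) as S1.
  pose proof (PASK_sound N HC _ _ H2 (fun _ => 0)) as S2.
  split; intro Hs.
  - destruct S1 as [psi [[<-|[]] Hps]]. { intros phi [<-|[]]; exact Hs. }
    simpl in Hps. unfold quote in Hps. rewrite eval_num in Hps.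
    apply post_Tneg in Hps; auto. exact (sat_neg_cons N HC _ _ Hs Hps).
  - destruct S2 as [psi [[<-|[]] Hps]]. { intros phi [<-|[]]; exact Hs. }
    simpl in Hps. unfold quote in Hps. rewrite eval_num in Hps.
    apply post_Tpos in Hps; auto. exact (sat_neg_cons N HC _ _ Hps Hs).
Qed.

Definition Mall (tp tn pp pn : Prop) : pmodel :=
  PM (fun _ => tp) (fun _ => tn) (fun _ => pp) (fun _ => pn).

Lemma not_bp_P q : ~ base_paradoxical (fP q).
Proof.
  intros [_ [[H1 _] _]].
  assert (HC : consistent (Mall False False True False)) by (split; intros x [? ?]; auto).
  destruct (PASK_sound _ HC _ _ H1 (fun _ => 0)) as [psi [[<-|[]] Hps]].
  - intros phi [<-|[]]; simpl; auto.
  - simpl in Hps. exact Hps.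
Qed.

Lemma not_bp_nP q : ~ base_paradoxical (fnP q).
Proof.
  intros [_ [[H1 _] _]].
  assert (HC : consistent (Mall False False False True)) by (split; intros x [? ?]; auto).
  destruct (PASK_sound _ HC _ _ H1 (fun _ => 0)) as [psi [[<-|[]] Hps]].
  - intros phi [<-|[]]; simpl; auto.
  - simpl in Hps. exact Hps.
Qed.

Lemma not_satPar_fP M q : ~ satPar M (fP q).
Proof.
  intro H. destruct H as [[H|H]|[H|[H|[H|[H|[H|H]]]]]].
  - exact (not_bp_P _ H).
  - exact (not_bp_nP _ H).
  - destruct H as (t & _ & Heq & _); discriminate.
  - destruct H as (t & _ & Heq & _); discriminate.
  - destruct H as (a & b & Heq & _); discriminate.
  - destruct H as (a & b & Heq & _); discriminate.
  - destruct H as (a & Heq & _); discriminate.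
  - destruct H as (a & Heq & _); discriminate.
Qed.

Definition Inv (N : pmodel) := consistent N /\ pm_le N (jump N) /\
  (forall x, Ppos N x -> Tpos N x -> False) /\ (forall x, Ppos N x -> Tneg N x -> False).

Lemma neg_inst a y : neg (inst a y) = inst (neg a) y.
Proof. unfold inst; apply neg_subst. Qed.

Lemma sound_step N : Inv N -> forall phi, satPar N phi -> ~ satSK N phi /\ ~ satSK N (neg phi).
Proof.
  intros [HC [Hpost [HPT HPF]]].
  assert (Hgen : forall n phi, fsize phi < n -> satPar N phi -> ~ satSK N phi /\ ~ satSK N (neg phi)).
  { induction n; intros phi Hsz Hp; [lia|].
    destruct Hp as [[Hb|Hb]|[Hp|[Hp|[Hp|[Hp|[Hp|Hp]]]]]].
    - apply BP; auto.
    - pose proof (BP N _ HC Hpost Hb) as [A B]. rewrite neg_neg in B. split; auto.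
    - destruct Hp as (t & _ & -> & Hv). unfold satSK; simpl.
      split; intro H; [apply (HPT _ Hv H) | apply (HPF _ Hv H)].
    - destruct Hp as (t & _ & -> & Hv). unfold satSK; simpl.
      split; intro H; [apply (HPF _ Hv H) | apply (HPT _ Hv H)].
    - destruct Hp as (a & b & -> & Hc). simpl in Hsz.
      assert (IHa : satPar N a -> ~ satSK N a /\ ~ satSK N (neg a)) by (apply IHn; lia).
      assert (IHb : satPar N b -> ~ satSK N b /\ ~ satSK N (neg b)) by (apply IHn; lia).
      unfold satSK in *; simpl.
      destruct Hc as [[Ha Hb]|[[Ha Hb]|[Hb Ha]]].
      + apply post_Ppos in Ha; apply post_Ppos in Hb; auto. split.
        * intros [Sa Sb]; apply (proj1 (IHa Ha) Sa).
        * intros [Sa|Sb]; [apply (proj2 (IHa Ha) Sa) | apply (proj2 (IHb Hb) Sb)].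
      + apply post_Tpos in Ha; apply post_Ppos in Hb; auto. split.
        * intros [Sa Sb]; apply (proj1 (IHb Hb) Sb).
        * intros [Sa|Sb]; [apply (sat_neg_cons N HC _ _ Ha Sa) | apply (proj2 (IHb Hb) Sb)].
      + apply post_Tpos in Hb; apply post_Ppos in Ha; auto. split.
        * intros [Sa Sb]; apply (proj1 (IHa Ha) Sa).
        * intros [Sa|Sb]; [apply (proj2 (IHa Ha) Sa) | apply (sat_neg_cons N HC _ _ Hb Sb)].
    - destruct Hp as (a & b & -> & Hc). simpl in Hsz.
      assert (IHa : satPar N a -> ~ satSK N a /\ ~ satSK N (neg a)) by (apply IHn; lia).
      assert (IHb : satPar N b -> ~ satSK N b /\ ~ satSK N (neg b)) by (apply IHn; lia).
      unfold satSK in *; simpl.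
      destruct Hc as [[Ha Hb]|[[Ha Hb]|[Hb Ha]]].
      + apply post_Ppos in Ha; apply post_Ppos in Hb; auto. split.
        * intros [Sa|Sb]; [apply (proj1 (IHa Ha) Sa) | apply (proj1 (IHb Hb) Sb)].
        * intros [Sa Sb]; apply (proj2 (IHa Ha) Sa).
      + apply post_Tneg in Ha; apply post_Ppos in Hb; auto. split.
        * intros [Sa|Sb]; [apply (sat_neg_cons N HC _ _ Sa Ha) | apply (proj1 (IHb Hb) Sb)].
        * intros [Sa Sb]; apply (proj2 (IHb Hb) Sb).
      + apply post_Tneg in Hb; apply post_Ppos in Ha; auto. split.
        * intros [Sa|Sb]; [apply (proj1 (IHa Ha) Sa) | apply (sat_neg_cons N HC _ _ Sb Hb)].
        * intros [Sa Sb]; apply (proj2 (IHa Ha) Sa).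
    - destruct Hp as (a & -> & [y Hy] & Hall). simpl in Hsz.
      assert (IHi : forall y, satPar N (inst a (num y)) ->
                 ~ satSK N (inst a (num y)) /\ ~ satSK N (neg (inst a (num y)))).
      { intro y'. apply IHn. unfold inst; rewrite fsize_subst; lia. }
      unfold satSK in *; simpl. split.
      + intro Hs. apply post_Ppos in Hy; auto. apply (proj1 (IHi y Hy)).
        apply sat_inst_num. apply Hs.
      + intros [m Hn]. destruct (Hall m) as [Hp|Ht].
        * apply post_Ppos in Hp; auto. apply (proj2 (IHi m Hp)).
          rewrite neg_inst. apply sat_inst_num. exact Hn.
        * apply post_Tpos in Ht; auto. apply (sat_neg_cons N HC _ _ Ht).
          rewrite neg_inst. apply sat_inst_num. exact Hn.
    - destruct Hp as (a & -> & [y Hy] & Hall). simpl in Hsz.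
      assert (IHi : forall y, satPar N (inst a (num y)) ->
                 ~ satSK N (inst a (num y)) /\ ~ satSK N (neg (inst a (num y)))).
      { intro y'. apply IHn. unfold inst; rewrite fsize_subst; lia. }
      unfold satSK in *; simpl. split.
      + intros [m Hn]. destruct (Hall m) as [Hp|Ht].
        * apply post_Ppos in Hp; auto. apply (proj1 (IHi m Hp)).
          apply sat_inst_num. exact Hn.
        * apply post_Tneg in Ht; auto. apply (sat_neg_cons N HC _ _ (proj2 (sat_inst_num _ _ _ _) Hn) Ht).
      + intro Hs. apply post_Ppos in Hy; auto. apply (proj2 (IHi y Hy)).
        rewrite neg_inst. apply sat_inst_num. apply Hs. }
  intros phi; apply (Hgen (S (fsize phi))); lia.
Qed.

Lemma Inv_jump M : Inv M -> Inv (jump M).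
Proof.
  intros HI. pose proof (sound_step M HI) as SS. destruct HI as [HC [Hpost [HPT HPF]]].
  split; [|split; [apply jump_mono; exact Hpost| split]].
  - split.
    + intros x [(phi & _ & -> & Hs) (phi' & _ & Hx & Hs')]. apply code_inj in Hx; subst.
      exact (sat_neg_cons M HC _ _ Hs Hs').
    + intros x [(phi & _ & -> & Hp) [(phi' & _ & Hx & Hs)|[q Hq]]].
      * apply code_inj in Hx; subst. unfold satSK in Hs; simpl in Hs.
        destruct Hs as [Hs|Hs]; [apply (proj1 (SS _ Hp) Hs) | apply (proj2 (SS _ Hp) Hs)].
      * apply code_inj in Hq; subst. exact (not_satPar_fP _ _ Hp).
  - intros x (phi & _ & -> & Hp) (phi' & _ & Hx & Hs). apply code_inj in Hx; subst.
    apply (proj1 (SS _ Hp) Hs).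
  - intros x (phi & _ & -> & Hp) (phi' & _ & Hx & Hs). apply code_inj in Hx; subst.
    apply (proj2 (SS _ Hp) Hs).
Qed.

Definition sup (F : pmodel -> Prop) : pmodel :=
  PM (fun x => exists M, F M /\ Tpos M x) (fun x => exists M, F M /\ Tneg M x)
     (fun x => exists M, F M /\ Ppos M x) (fun x => exists M, F M /\ Pneg M x).

Lemma le_sup F M : F M -> pm_le M (sup F).
Proof. intro H; repeat split; simpl; intros x Hx; eauto. Qed.

Lemma sup_le F N : (forall M, F M -> pm_le M N) -> pm_le (sup F) N.
Proof.
  intro H; repeat split; simpl; intros x [M [HM Hx]]; specialize (H M HM);
    eauto using le_Tpos, le_Tneg, le_Ppos, le_Pneg.
Qed.

Inductive Tw : pmodel -> Prop :=
| tw_j M : Tw M -> Tw (jump M)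
| tw_s F : (forall M, F M -> Tw M) -> Tw (sup F).

Lemma Tw_infl M : Tw M -> pm_le M (jump M).
Proof.
  induction 1 as [M HM IH | F HF IH].
  - apply jump_mono; auto.
  - apply sup_le. intros M HM. apply le_trans with (jump M); [auto|].
    apply jump_mono, le_sup; auto.
Qed.

Definition lt M N := pm_le M N /\ ~ pm_le N M.
Definition extreme c := forall x, Tw x -> lt x c -> pm_le (jump x) c.

Lemma ext_lemma c : Tw c -> extreme c -> forall x, Tw x -> pm_le x c \/ pm_le (jump c) x.
Proof.
  intros Hc He x Hx. induction Hx as [y Hy IH | F HF IH].
  - destruct IH as [Hyc|Hcy].
    + destruct (classic (pm_le c y)) as [Hcy|Hncy].
      * right. apply jump_mono; auto.
      * left. apply He; [exact Hy | split; auto].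
    + right. apply le_trans with y; auto. apply Tw_infl; auto.
  - destruct (classic (exists M, F M /\ pm_le (jump c) M)) as [[M [HM Hle]]|Hn].
    + right. apply le_trans with M; auto. apply le_sup; auto.
    + left. apply sup_le. intros M HM. destruct (IH M HM) as [H|H]; [exact H|].
      exfalso; apply Hn; eauto.
Qed.

Lemma all_extreme c : Tw c -> extreme c.
Proof.
  induction 1 as [d Hd IH | F HF IH].
  - intros x Hx [Hxl Hnl]. destruct (ext_lemma d Hd IH x Hx) as [Hxd|Hdx].
    + apply jump_mono; auto.
    + exfalso; apply Hnl; auto.
  - intros x Hx [Hxl Hnl].
    destruct (classic (exists M, F M /\ lt x M)) as [[M [HM Hlt]]|Hn].
    + apply le_trans with M; [apply (IH M HM x Hx Hlt) | apply le_sup; auto].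
    + exfalso; apply Hnl. apply sup_le; intros M HM.
      destruct (ext_lemma M (HF M HM) (IH M HM) x Hx) as [Hxm|Hmx].
      * destruct (classic (pm_le M x)) as [Hmx|Hnmx]; [exact Hmx|].
        exfalso; apply Hn; exists M; split; auto; split; auto.
      * apply le_trans with (jump M); auto. apply Tw_infl; auto.
Qed.

Lemma Tw_chain a b : Tw a -> Tw b -> pm_le a b \/ pm_le b a.
Proof.
  intros Ha Hb. destruct (ext_lemma b Hb (all_extreme b Hb) a Ha) as [H|H]; [left; auto|].
  right. apply le_trans with (jump b); auto. apply Tw_infl; auto.
Qed.

Lemma Tw_Inv M : Tw M -> Inv M.
Proof.
  intro HM. pose proof (Tw_infl M HM) as Hinf.
  induction HM as [M HM IH | F HF IH].
  - apply Inv_jump; apply IH; apply Tw_infl; auto.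
  - assert (IH' : forall M, F M -> Inv M) by (intros M H; apply IH; auto; apply Tw_infl; auto).
    split; [|split; [exact Hinf|split]].
    + split.
      * intros x [[M1 [HM1 H1]] [M2 [HM2 H2]]].
        destruct (Tw_chain M1 M2 (HF _ HM1) (HF _ HM2)) as [Hle|Hle].
        -- apply (proj1 (proj1 (IH' M2 HM2)) x); split; [apply (le_Tpos _ _ _ Hle)|]; auto.
        -- apply (proj1 (proj1 (IH' M1 HM1)) x); split; [|apply (le_Tneg _ _ _ Hle)]; auto.
      * intros x [[M1 [HM1 H1]] [M2 [HM2 H2]]].
        destruct (Tw_chain M1 M2 (HF _ HM1) (HF _ HM2)) as [Hle|Hle].
        -- apply (proj2 (proj1 (IH' M2 HM2)) x); split; [apply (le_Ppos _ _ _ Hle)|]; auto.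
        -- apply (proj2 (proj1 (IH' M1 HM1)) x); split; [|apply (le_Pneg _ _ _ Hle)]; auto.
    + intros x [M1 [HM1 H1]] [M2 [HM2 H2]].
      destruct (Tw_chain M1 M2 (HF _ HM1) (HF _ HM2)) as [Hle|Hle].
      * apply (proj1 (proj2 (proj2 (IH' M2 HM2))) x); [apply (le_Ppos _ _ _ Hle)|]; auto.
      * apply (proj1 (proj2 (proj2 (IH' M1 HM1))) x); [|apply (le_Tpos _ _ _ Hle)]; auto.
    + intros x [M1 [HM1 H1]] [M2 [HM2 H2]].
      destruct (Tw_chain M1 M2 (HF _ HM1) (HF _ HM2)) as [Hle|Hle].
      * apply (proj2 (proj2 (proj2 (IH' M2 HM2))) x); [apply (le_Ppos _ _ _ Hle)|]; auto.
      * apply (proj2 (proj2 (proj2 (IH' M1 HM1))) x); [|apply (le_Tneg _ _ _ Hle)]; auto.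
Qed.

Theorem mainTheorem15 : consistent lfp_jump /\ sound_star lfp_jump.
Proof.
  set (U := sup Tw).
  assert (HU : Tw U) by (apply tw_s; auto).
  pose proof (Tw_Inv U HU) as HInv.
  assert (Hpre : pm_le (jump U) U) by (apply le_sup; apply tw_j; auto).
  assert (HLU : pm_le lfp_jump U) by (repeat split; intros x H; exact (H U Hpre)).
  split.
  - split.
    + intros x [H1 H2]. apply (proj1 (proj1 HInv) x); split;
        [apply (le_Tpos _ _ _ HLU) | apply (le_Tneg _ _ _ HLU)]; auto.
    + intros x [H1 H2]. apply (proj2 (proj1 HInv) x); split;
        [apply (le_Ppos _ _ _ HLU) | apply (le_Pneg _ _ _ HLU)]; auto.
  - intros phi _ Hc Hp. apply (satPar_mono _ _ _ HLU) in Hp.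
    destruct Hc as [[q Hq]|Hs].
    + apply code_inj in Hq; subst. exact (not_satPar_fP _ _ Hp).
    + apply (sat_mono _ _ HLU) in Hs. simpl in Hs.
      destruct Hs as [Hs|Hs]; [apply (proj1 (sound_step U HInv phi Hp) Hs)
                              | apply (proj2 (sound_step U HInv phi Hp) Hs)].
Qed.
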